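(* Let $k\in\mathbb{F}$ be nonzero and for $j\in\tfrac12\mathbb{N}^+$ let $D^{(j)}=\mathrm{diag}(1,k,k^2,\dots,k^{2j})$. Then for all $j_1,j_2\in\tfrac12\mathbb{N}^+$, \[ \big(D^{(j_1)}\otimes D^{(j_2)}\big)R^{(j_1,j_2)}(t)=R^{(j_1,j_2)}(t)\big(D^{(j_1)}\otimes D^{(j_2)}\big). \]
   Context: $\mathbb{F}$ is a field of characteristic zero in which every element has a square root; $q\in\mathbb{F}$ nonzero, not a root of unity, with fixed square root $q^{1/2}$ ($q^{k/2}:=(q^{1/2})^{k}$ for integers); other $(\cdot)^{1/2}$ are fixed square roots in $\mathbb{F}$. $[n]_q=\frac{q^n-q^{-n}}{q-q^{-1}}$, $c(t)=t-t^{-1}$, $\tfrac12\mathbb{N}^+=\{\tfrac12,1,\tfrac32,\dots\}$, $t$ an indeterminate, $\otimes$ Kronecker product. Leg notation: for factors $\mathbb{F}^{n_1}\otimes\mathbb{F}^{n_2}\otimes\mathbb{F}^{n_3}$, $X_{12}=X\otimes I_{n_3}$, $X_{23}=I_{n_1}\otimes X$, $X_{13}=P(X\otimes I_{n_2})P$ with $P$ the flip of factors 2,3; for non-square $Y$, $Y_{12}=Y\otimes I_{n_3}$, $Y_{23}=I_{n_1}\otimes Y$. For $j\in\tfrac12\mathbb{N}^+$: $\mathcal{E}^{(j+\frac12)}$ is $(4j+2)\times(2j+2)$ with only nonzero entries $\mathcal{E}_{(a,a)}=\big(\frac{[2j+2-a]_q}{[2j+1]_q}\big)^{1/2}$, $\mathcal{E}_{(a+2j+1,a+1)}=\big(\frac{[a]_q}{[2j+1]_q}\big)^{1/2}$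 ($1\le a\le 2j+1$); $\mathcal{F}^{(j+\frac12)}$ is $(2j+2)\times(4j+2)$ with only nonzero entries $\mathcal{F}_{(a,a)}=\frac{([2j+2-a]_q[2j+1]_q)^{1/2}}{[2j+2-a]_q+[a-1]_q}$, $\mathcal{F}_{(a+1,a+2j+1)}=\frac{([a]_q[2j+1]_q)^{1/2}}{[2j+1-a]_q+[a]_q}$ ($1\le a\le 2j+1$). $R^{(\frac12,\frac12)}(t)$ is the $4\times4$ matrix with rows $(c(qt),0,0,0),(0,c(t),c(q),0),(0,c(q),c(t),0),(0,0,0,c(qt))$; recursively $R^{(\frac12,j+\frac12)}(t)=\mathcal{F}^{(j+\frac12)}_{23}R^{(\frac12,j)}_{13}(q^{-1/2}t)R^{(\frac12,\frac12)}_{12}(q^{j}t)\mathcal{E}^{(j+\frac12)}_{23}$ (factor sizes $2,2,2j+1$) and $R^{(j_1+\frac12,j_2)}(t)=\mathcal{F}^{(j_1+\frac12)}_{12}R^{(\frac12,j_2)}_{13}(q^{-j_1}t)R^{(j_1,j_2)}_{23}(q^{1/2}t)\mathcal{E}^{(j_1+\frac12)}_{12}$ (factor sizes $2,2j_1+1,2j_2+1$). *)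

(* Defs.v *)
(* Kronecker product = [tensmx] from mathcomp-real-closed
   (row-major: index (i1,i2) <-> i1 * n2 + i2). *)
From HB Require Import structures.
From mathcomp Require Import all_boot all_order all_algebra.
From mathcomp Require Export fraction.
From mathcomp.real_closed Require Export mxtens.
Set Implicit Arguments. Unset Strict Implicit. Unset Printing Implicit Defensive.
Import Order.TTheory GRing.Theory Num.Theory.
Local Open Scope ring_scope.

(* Conventions: a spin j in (1/2)N^+ is encoded by n : nat with 2j = n+1,
   so the dimension 2j+1 is n.+2.  The indeterminate t lives in the field of
   rational functions T := {fraction {poly F}}, and t := 'X. *)

Section Rmatrices.
Variable F : fieldType.
Variable sq : F -> F.
Variables q qh : F.        (* q and its fixed square root q^{1/2} *)

Definition T := {fraction {poly F}}.
Definition emb (a : F) : T := FracField.tofrac (a%:P).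
Definition tX : T := FracField.tofrac ('X : {poly F}).

Definition qnum (n : nat) : F := (q ^+ n - q ^- n) / (q - q^-1).

Definition cfun (x : T) : T := x - x^-1.

Definition Dmx (k : F) (n : nat) : 'M[F]_(n.+2) := diag_mx (\row_(i < n.+2) k ^+ i).

(* E^{(j+1/2)}, 2j = n+1: (4j+2) x (2j+2) matrix, 0-based indices *)
Definition Emx (n : nat) : 'M[F]_(2 * n.+2, n.+3) :=
  \matrix_(i, l)
    if (val i == val l) && (val i < n.+2)%N then
      sq (qnum (n.+2 - i) / qnum n.+2)
    else if (val i == val l + n.+1)%N && (0 < val l)%N then
      sq (qnum l / qnum n.+2)
    else 0.

(* F^{(j+1/2)}, 2j = n+1: (2j+2) x (4j+2) matrix, 0-based indices *)
Definition Fmx (n : nat) : 'M[F]_(n.+3, 2 * n.+2) :=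
  \matrix_(r, c)
    if (val r == val c) && (val r < n.+2)%N then
      sq (qnum (n.+2 - r) * qnum n.+2) / (qnum (n.+2 - r) + qnum r)
    else if (val c == val r + n.+1)%N && (0 < val r)%N then
      sq (qnum r * qnum n.+2) / (qnum (n.+2 - r) + qnum r)
    else 0.

(* flip of the last two tensor factors:  F^a (x) F^c (x) F^b -> F^a (x) F^b (x) F^c *)
Definition flipmx (a b c : nat) : 'M[T]_(a * (b * c), a * (c * b)) :=
  \matrix_(i, j)
    let i1 := (mxtens_unindex i).1 in let i23 := (mxtens_unindex i).2 in
    let j1 := (mxtens_unindex j).1 in let j32 := (mxtens_unindex j).2 in
    ((i1 == j1) && ((mxtens_unindex i23).1 == (mxtens_unindex j32).2)
                && ((mxtens_unindex i23).2 == (mxtens_unindex j32).1))%:R.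

Definition leg12 (a b c : nat) (X : 'M[T]_(a * b)) : 'M[T]_(a * (b * c)) :=
  castmx (esym (mulnA a b c), esym (mulnA a b c)) (X *t (1%:M : 'M[T]_c)).
Definition leg23 (a b c : nat) (X : 'M[T]_(b * c)) : 'M[T]_(a * (b * c)) :=
  (1%:M : 'M[T]_a) *t X.
Definition leg13 (a b c : nat) (X : 'M[T]_(a * c)) : 'M[T]_(a * (b * c)) :=
  flipmx a b c
  *m castmx (esym (mulnA a c b), esym (mulnA a c b)) (X *t (1%:M : 'M[T]_b))
  *m flipmx a c b.

Definition R11 (t : T) : 'M[T]_(2 * 2) :=
  \matrix_(i, j)
    if val i == val j then
      (if (val i == 0%N) || (val i == 3%N) then cfun (emb q * t) else cfun t)
    else if ((val i == 1%N) && (val j == 2%N)) || ((val i == 2%N) && (val j == 1%N))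
    then cfun (emb q) else 0.

(* R^{(1/2,j)}(t), 2j = n+1; recursion R^{(1/2,j+1/2)}(t) =
   F_{23} R^{(1/2,j)}_{13}(q^{-1/2} t) R^{(1/2,1/2)}_{12}(q^j t) E_{23},
   factor sizes 2, 2, 2j+1. *)
Fixpoint Rhalf (n : nat) (t : T) : 'M[T]_(2 * n.+2) :=
  match n return 'M[T]_(2 * n.+2) with
  | 0 => R11 t
  | m.+1 =>
      ((1%:M : 'M[T]_2) *t map_mx emb (Fmx m))
      *m @leg13 2 2 m.+2 (Rhalf m (emb qh^-1 * t))
      *m @leg12 2 2 m.+2 (R11 (emb qh ^+ m.+1 * t))
      *m ((1%:M : 'M[T]_2) *t map_mx emb (Emx m))
  end.

(* R^{(j1,j2)}(t), 2 j1 = n1+1, 2 j2 = n2+1; recursion R^{(j1+1/2,j2)}(t) =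
   F_{12} R^{(1/2,j2)}_{13}(q^{-j1} t) R^{(j1,j2)}_{23}(q^{1/2} t) E_{12},
   factor sizes 2, 2j1+1, 2j2+1. *)
Fixpoint Rmat (n1 n2 : nat) (t : T) : 'M[T]_(n1.+2 * n2.+2) :=
  match n1 return 'M[T]_(n1.+2 * n2.+2) with
  | 0 => Rhalf n2 t
  | m.+1 =>
      castmx (erefl, esym (mulnA 2 m.+2 n2.+2))
        (map_mx emb (Fmx m) *t (1%:M : 'M[T]_(n2.+2)))
      *m @leg13 2 m.+2 n2.+2 (Rhalf n2 (emb qh ^- m.+1 * t))
      *m @leg23 2 m.+2 n2.+2 (Rmat m n2 (emb qh * t))
      *m castmx (esym (mulnA 2 m.+2 n2.+2), erefl)
        (map_mx emb (Emx m) *t (1%:M : 'M[T]_(n2.+2)))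
  end.

End Rmatrices.

(* Main.v *)
Require Import Defs.
From HB Require Import structures.
From mathcomp Require Import all_boot all_order all_algebra.
From mathcomp Require Import fraction.
From mathcomp.real_closed Require Import mxtens.
Import GRing.Theory.
Local Open Scope ring_scope.
Set Implicit Arguments. Unset Strict Implicit.

Section Int.
Variable R : comPzRingType.
Variable x : R.

Definition IntW m n (w1 : 'I_m -> nat) (M : 'M[R]_(m,n)) (w2 : 'I_n -> nat) :=
  forall i j, x ^+ w1 i * M i j = M i j * x ^+ w2 j.

Definition ten m n (w1 : 'I_m -> nat) (w2 : 'I_n -> nat) : 'I_(m * n) -> nat :=
  fun i => (w1 (mxtens_unindex i).1 + w2 (mxtens_unindex i).2)%N.

Definition idw n : 'I_n -> nat := fun i => val i.

Lemma IntW_mul m n p w1 w2 w3 (A : 'M[R]_(m,n)) (B : 'M[R]_(n,p)) :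
  IntW w1 A w2 -> IntW w2 B w3 -> IntW w1 (A *m B) w3.
Proof.
move=> HA HB i j; rewrite !mxE mulr_sumr mulr_suml; apply: eq_bigr => l _.
by rewrite mulrA HA -mulrA HB mulrA.
Qed.

Lemma IntW_tens m n p r w1 w2 v1 v2 (A : 'M[R]_(m,n)) (B : 'M[R]_(p,r)) :
  IntW w1 A w2 -> IntW v1 B v2 -> IntW (ten w1 v1) (A *t B) (ten w2 v2).
Proof.
move=> HA HB i j; rewrite !mxE /ten !exprD.
rewrite mulrACA HA HB mulrACA; congr (_ * _); rewrite mulrC; done.
Qed.

Lemma IntW_1 n w : IntW w (1%:M : 'M[R]_n) w.
Proof. by move=> i j; rewrite !mxE; case: eqP => [->|]; rewrite ?mulr0n ?mul0r ?mulr0 ?mulr1n ?mul1r ?mulr1. Qed.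

Lemma IntW_ext m n w1 w2 w1' w2' (M : 'M[R]_(m,n)) :
  w1 =1 w1' -> w2 =1 w2' -> IntW w1 M w2 -> IntW w1' M w2'.
Proof. by move=> e1 e2 H i j; rewrite -e1 -e2. Qed.

Lemma IntW_cast m n m' n' (e1 : m = m') (e2 : n = n') w1 w2 (M : 'M[R]_(m,n)) :
  IntW w1 M w2 ->
  IntW (fun i => w1 (cast_ord (esym e1) i)) (castmx (e1, e2) M)
       (fun j => w2 (cast_ord (esym e2) j)).
Proof. by move=> H i j; rewrite !castmxE H. Qed.

Lemma IntW_suff m n w1 w2 (M : 'M[R]_(m,n)) :
  (forall i j, M i j != 0 -> w1 i = w2 j) -> IntW w1 M w2.
Proof.
move=> H i j; have [->|/H ->] := eqVneq (M i j) 0; first by rewrite mulr0 mul0r.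
by rewrite mulrC.
Qed.

Lemma IntW_diag m n w1 w2 (M : 'M[R]_(m,n)) : IntW w1 M w2 ->
  diag_mx (\row_i x ^+ w1 i) *m M = M *m diag_mx (\row_j x ^+ w2 j).
Proof. by move=> H; rewrite mul_diag_mx mul_mx_diag; apply/matrixP=> i j; rewrite !mxE H. Qed.

End Int.

Lemma nat_divmod v b c : (v %/ c %% b = v %% (b * c) %/ c)%N.
Proof.
case: c => [|c]; first by rewrite !divn0 mod0n.
case: b => [|b]; first by rewrite !mul0n !modn0.
rewrite {1}(divn_eq v (b.+1 * c.+1)) mulnA divnMDl // modnMDl modn_small //.
by rewrite ltn_divLR // ltn_pmod // muln_gt0.
Qed.

Lemma tenA a b c wa wb wc (e : (a * (b * c) = (a * b) * c)%N) (i : 'I_(a * (b * c))) :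
  ten (ten wa wb) wc (cast_ord e i) = ten wa (ten wb wc) i.
Proof.
rewrite /ten addnA; congr (_ + _ + _).
- congr wa; apply: val_inj => /=; move: (val i) => v; by rewrite (mulnC b c) divnMA.
- congr wb; apply: val_inj => /=; exact: nat_divmod.
- congr wc; apply: val_inj => /=; rewrite modn_dvdm //; exact: dvdn_mull.
Qed.

Section Main.
Variable F : fieldType.
Variable k : F.
Notation K := (emb k).

Lemma emb0 : emb (0 : F) = 0.
Proof. by rewrite /emb polyC0 rmorph0. Qed.

Lemma emb_nz (a : F) : emb a != 0 -> a != 0.
Proof. by apply: contra => /eqP ->; rewrite emb0. Qed.

Lemma IntW_mapF m n w1 w2 (M : 'M[F]_(m,n)) :
  (forall i j, M i j != 0 -> w1 i = w2 j) -> IntW K w1 (map_mx (@emb F) M) w2.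
Proof. by move=> H; apply: IntW_suff => i j; rewrite mxE => /emb_nz/H. Qed.

Lemma IntW_flip a b c wa wb wc :
  IntW K (ten wa (ten wb wc)) (flipmx F a b c) (ten wa (ten wc wb)).
Proof.
apply: IntW_suff => i j; rewrite mxE.
rewrite /=; case E: (_ && _ && _); first last.
  by rewrite eqxx.
move: E => /andP[/andP[/eqP e1 /eqP e2] /eqP e3] _; rewrite /ten /= e1 e2 e3.
congr (_ + _)%N; exact: addnC.
Qed.

Lemma IntW_leg13 a b c wa wb wc (X : 'M[T F]_(a * c)) :
  IntW K (ten wa wc) X (ten wa wc) ->
  IntW K (ten wa (ten wb wc)) (leg13 b X) (ten wa (ten wb wc)).
Proof.
move=> HX; rewrite /leg13; apply: IntW_mul; last exact: IntW_flip.
apply: IntW_mul; first exact: IntW_flip.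
apply: (IntW_ext _ _ (IntW_cast (esym (mulnA a c b)) (esym (mulnA a c b)) (IntW_tens HX (IntW_1 _ wb)))).
- by move=> i; rewrite esymK tenA.
- by move=> i; rewrite esymK tenA.
Qed.

Lemma IntW_leg12 a b c wa wb wc (X : 'M[T F]_(a * b)) :
  IntW K (ten wa wb) X (ten wa wb) ->
  IntW K (ten wa (ten wb wc)) (leg12 c X) (ten wa (ten wb wc)).
Proof.
move=> HX; rewrite /leg12.
apply: (IntW_ext _ _ (IntW_cast (esym (mulnA a b c)) (esym (mulnA a b c)) (IntW_tens HX (IntW_1 _ wc)))).
- by move=> i; rewrite esymK tenA.
- by move=> i; rewrite esymK tenA.
Qed.

Lemma IntW_leg23 a b c wa wb wc (X : 'M[T F]_(b * c)) :
  IntW K (ten wb wc) X (ten wb wc) ->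
  IntW K (ten wa (ten wb wc)) (leg23 a X) (ten wa (ten wb wc)).
Proof. by move=> HX; apply: IntW_tens => //; apply: IntW_1. Qed.


Lemma IntW_E (sq : F -> F) (q : F) n :
  IntW K (ten (@idw 2) (@idw n.+2)) (map_mx (@emb F) (Emx sq q n)) (@idw n.+3).
Proof.
apply: IntW_mapF => i l; rewrite mxE /ten /idw /=.
case: ifP => [/andP[/eqP e lt] _|_].
  by rewrite divn_small // modn_small // e.
case: ifP => [/andP[/eqP e lt] _|_]; last by rewrite eqxx.
rewrite e; move: lt (ltn_ord l); case: (val l) => [|l'] //= _ hl.
have -> : (l'.+1 + n.+1 = 1 * n.+2 + l')%N by rewrite mul1n addSnnS addnC.
by rewrite divnMDl // modnMDl divn_small // modn_small.
Qed.

Lemma IntW_F (sq : F -> F) (q : F) n :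
  IntW K (@idw n.+3) (map_mx (@emb F) (Fmx sq q n)) (ten (@idw 2) (@idw n.+2)).
Proof.
apply: IntW_mapF => l i; rewrite mxE /ten /idw /=.
case: ifP => [/andP[/eqP e lt] _|_].
  by rewrite -e divn_small // modn_small.
case: ifP => [/andP[/eqP e lt] _|_]; last by rewrite eqxx.
rewrite e; move: lt (ltn_ord l); case: (val l) => [|l'] //= _ hl.
have -> : (l'.+1 + n.+1 = 1 * n.+2 + l')%N by rewrite mul1n addSnnS addnC.
by rewrite divnMDl // modnMDl divn_small // modn_small.
Qed.

Lemma IntW_R11 (q : F) (t : T F) :
  IntW K (ten (@idw 2) (@idw 2)) (R11 q t) (ten (@idw 2) (@idw 2)).
Proof.
apply: IntW_suff => i j; rewrite mxE /ten /idw /=.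
case: i => [[|[|[|[|i]]]] Hi] //; case: j => [[|[|[|[|j]]]] Hj] //=;
  by rewrite ?eqxx.
Qed.


Lemma IntW_Rhalf (sq : F -> F) (q qh : F) n (t : T F) :
  IntW K (ten (@idw 2) (@idw n.+2)) (Rhalf sq q qh n t) (ten (@idw 2) (@idw n.+2)).
Proof.
elim: n t => [|m IH] t /=; first exact: IntW_R11.
apply: (@IntW_mul _ _ _ _ _ _ (ten (@idw 2) (ten (@idw 2) (@idw m.+2)))).
  apply: (@IntW_mul _ _ _ _ _ _ (ten (@idw 2) (ten (@idw 2) (@idw m.+2)))).
    apply: (@IntW_mul _ _ _ _ _ _ (ten (@idw 2) (ten (@idw 2) (@idw m.+2)))).
      apply: IntW_tens; [exact: IntW_1 | first [exact: IntW_F | exact: IntW_E]].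
    exact: IntW_leg13.
  apply: IntW_leg12; exact: IntW_R11.
apply: IntW_tens; [exact: IntW_1 | first [exact: IntW_F | exact: IntW_E]].
Qed.

Lemma IntW_Rmat (sq : F -> F) (q qh : F) n1 n2 (t : T F) :
  IntW K (ten (@idw n1.+2) (@idw n2.+2)) (Rmat sq q qh n1 n2 t)
         (ten (@idw n1.+2) (@idw n2.+2)).
Proof.
elim: n1 t => [|m IH] t /=; first exact: IntW_Rhalf.
pose w3 := ten (@idw 2) (ten (@idw m.+2) (@idw n2.+2)).
apply: (@IntW_mul _ _ _ _ _ _ w3).
  apply: (@IntW_mul _ _ _ _ _ _ w3).
    apply: (@IntW_mul _ _ _ _ _ _ w3).
      eapply IntW_ext; last first.
        apply: IntW_cast; apply: IntW_tens; [exact: IntW_F | exact: (@IntW_1 _ _ _ (@idw n2.+2))].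
      - by move=> j /=; rewrite esymK tenA.
      - by [].
    apply: IntW_leg13; exact: IntW_Rhalf.
  apply: IntW_leg23; exact: IH.
eapply IntW_ext; last first.
  apply: IntW_cast; apply: IntW_tens; [exact: IntW_E | exact: (@IntW_1 _ _ _ (@idw n2.+2))].
- by [].
- by move=> j /=; rewrite esymK tenA.
Qed.

Lemma Dmx_tens n1 n2 :
  map_mx (@emb F) (Dmx k n1 *t Dmx k n2)
  = diag_mx (\row_i K ^+ ten (@idw n1.+2) (@idw n2.+2) i).
Proof.
apply/matrixP => i j.
case: (mxtens_indexP i) => i1 i2; case: (mxtens_indexP j) => j1 j2.
rewrite mxE tensmxE !mxE /ten mxtens_indexK /idw /=.
rewrite (can_eq (@mxtens_indexK _ _)) xpair_eqE.
case: (eqVneq i1 j1) => [->|ne1]; case: (eqVneq i2 j2) => [->|ne2] /=;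
  rewrite ?mulr1n ?mulr0n ?mul0r ?mulr0 ?emb0 //.
by rewrite -exprD /emb -rmorphXn -rmorphXn /=.
Qed.

End Main.

Theorem lemmaB2 (F : fieldType) (sq : F -> F) (q qh : F) :
  [pchar F] =i pred0 ->
  (forall x : F, sq x ^+ 2 = x) ->
  q != 0 ->
  (forall n : nat, (0 < n)%N -> q ^+ n != 1) ->
  qh ^+ 2 = q ->
  forall k : F, k != 0 ->
  forall n1 n2 : nat,
    map_mx (emb (F:=F)) (Dmx k n1 *t Dmx k n2) *m Rmat sq q qh n1 n2 (tX F)
    = Rmat sq q qh n1 n2 (tX F) *m map_mx (emb (F:=F)) (Dmx k n1 *t Dmx k n2).
Proof.
move=> _ _ _ _ _ k _ n1 n2.
rewrite Dmx_tens; apply: IntW_diag; exact: IntW_Rmat.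
Qed.
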